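(* Let $Z_1,\dots,Z_n$ be independent real-valued sub-Gaussian random variables with parameter $\sigma^2$, let $\alpha\in(0,1]$, and fix $p_0\in(0,\frac12]$. Then there is an event $\mathcal{E}^{\mathrm{ord}}_{p_0}$ with $\mathbb{P}[\mathcal{E}^{\mathrm{ord}}_{p_0}]\ge 1-2e^{-0.3n}$ on which, for all $p\in[p_0,\frac12]$ and all sub-collections $V\subseteq\{Z_1,\dots,Z_n\}$ with $|V|\ge\max\{n\alpha,\,2/p_0\}$, $$-\sigma\sqrt{\tfrac{4}{p_0}\big(\tfrac1\alpha+1\big)}\ \le\ V^{(\lceil(1-p)|V|\rceil)}\ \le\ V^{(\lfloor p|V|\rfloor)}\ \le\ \sigma\sqrt{\tfrac{4}{p_0}\big(\tfrac1\alpha+1\big)}.$$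
   Context: A real random variable $Z$ is sub-Gaussian with parameter $\sigma^2$ if $\mathbb{E}[e^{\lambda Z}]\le e^{\lambda^2\sigma^2/2}$ for all $\lambda\in\mathbb{R}$. For a finite multiset of reals $\{v_1,\dots,v_m\}$, its order statistics are $v^{(1)}\ge v^{(2)}\ge\dots\ge v^{(m)}$ (so $v^{(t)}$ is the $t$-th largest). Sub-collections $V$ are indexed by subsets of $[n]$. *)

(* Defs.v *)
From HB Require Import structures.
From mathcomp Require Import all_boot all_order all_algebra.
From mathcomp Require Import all_classical all_reals all_analysis.
Set Implicit Arguments. Unset Strict Implicit. Unset Printing Implicit Defensive.
Import Order.TTheory GRing.Theory Num.Theory.
Local Open Scope ring_scope.
Local Open Scope classical_set_scope.

Definition mutually_independent {d} {T : measurableType d} {R : realType}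
  (P : probability T R) {n : nat} (Z : 'I_n -> {RV P >-> R}) : Prop :=
  forall (J : {set 'I_n}) (B : 'I_n -> set R),
    (forall j, measurable (B j)) ->
    P (\bigcap_(j in [set j | j \in J]) (Z j @^-1` B j)) =
    (\prod_(j in J) P (Z j @^-1` B j))%E.

Definition subgaussian {d} {T : measurableType d} {R : realType}
  (P : probability T R) (X : T -> R) (s2 : R) : Prop :=
  forall lam : R,
    (\int[P]_w (expR (lam * X w))%:E <= (expR (lam ^+ 2 * s2 / 2))%:E)%E.

(* t-th largest element (1-indexed) of a finite multiset of reals. *)
Definition ordstat {R : realType} (s : seq R) (t : nat) : R :=
  nth 0 (sort (fun x y => y <= x) s) t.-1.

(* floor and ceil as natural numbers (used only on nonnegative arguments) *)
Definition natfloor {R : realType} (x : R) : nat := `|Num.floor x|%N.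
Definition natceil {R : realType} (x : R) : nat := `|Num.ceil x|%N.

(* Main.v *)
Require Import Defs.
From HB Require Import structures.
From mathcomp Require Import all_boot all_order all_algebra.
From mathcomp Require Import all_classical all_reals all_analysis.
From mathcomp Require Import ring lra.
Import Order.TTheory GRing.Theory Num.Theory.
Local Open Scope ring_scope.
Local Open Scope classical_set_scope.


Section comb.
Variable R : realType.

Let ge := (fun x y : R => y <= x).
Let ge_tr : transitive ge. Proof. by move=> x y z /= h1 h2; apply: le_trans h2 h1. Qed.
Let ge_refl : reflexive ge. Proof. by move=> x; rewrite /ge. Qed.
Let ge_tot : total ge. Proof. by move=> x y; rewrite /ge orbC le_total. Qed.

Lemma ordstat_nth_le (s : seq R) i j : (i <= j)%N -> (j < size s)%N ->
  nth 0 (sort ge s) j <= nth 0 (sort ge s) i.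
Proof.
move=> ij js.
have ss : sorted ge (sort ge s) by apply: sort_sorted.
apply: (sorted_leq_nth ge_tr ge_refl 0 ss) => //; rewrite inE size_sort //.
exact: leq_ltn_trans js.
Qed.

Lemma ordstat_mono (s : seq R) t1 t2 : (0 < t1)%N -> (t1 <= t2)%N -> (t2 <= size s)%N ->
  ordstat s t2 <= ordstat s t1.
Proof.
move=> t10 t12 t2s; rewrite /ordstat; apply: ordstat_nth_le.
  by rewrite -!subn1 leq_sub2r.
by rewrite prednK ?(leq_trans t10 t12).
Qed.

Lemma ordstat_up (s : seq R) t b : (0 < t <= size s)%N -> b < ordstat s t ->
  (t <= count (fun x => (b < x)%R) s)%N.
Proof.
move=> /andP[t0 ts] hb.
have pe : perm_eq (sort ge s) s by rewrite perm_sort.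
rewrite -(permP pe) -(cat_take_drop t (sort ge s)) count_cat.
apply: leq_trans (leq_addr _ _).
have sz : size (take t (sort ge s)) = t by rewrite size_takel // size_sort.
have al : all (fun x => b < x) (take t (sort ge s)).
  apply/(all_nthP 0) => i; rewrite sz => it.
  rewrite nth_take //; apply: lt_le_trans hb _; rewrite /ordstat.
  apply: ordstat_nth_le; first by rewrite -ltnS prednK.
  by rewrite -ltnS prednK.
by move: al; rewrite all_count => /eqP ->; rewrite sz.
Qed.

Lemma ordstat_lo (s : seq R) t b : (0 < t <= size s)%N -> ordstat s t < b ->
  (size s - t.-1 <= count (fun x => (x < b)%R) s)%N.
Proof.
move=> /andP[t0 ts] hb.
have pe : perm_eq (sort ge s) s by rewrite perm_sort.
rewrite -(permP pe) -(cat_take_drop t.-1 (sort ge s)) count_cat.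
apply: leq_trans (leq_addl _ _).
have sz : size (drop t.-1 (sort ge s)) = (size s - t.-1)%N by rewrite size_drop size_sort.
have al : all (fun x => x < b) (drop t.-1 (sort ge s)).
  apply/(all_nthP 0) => i; rewrite sz => it.
  rewrite nth_drop; apply: le_lt_trans _ hb; rewrite /ordstat.
  apply: ordstat_nth_le; first exact: leq_addr.
  by rewrite -ltn_subRL.
by move: al; rewrite all_count => /eqP ->; rewrite sz.
Qed.

Lemma count_card n (V : {set 'I_n}) (p : pred 'I_n) :
  count p (enum V) = #|V :&: [set i | p i]|.
Proof.
rewrite cardE (perm_size (enum_setI _ _)) size_filter.
by apply: eq_count => i; rewrite inE.
Qed.

Lemma natfloorE (x : R) : 0 <= x ->
  (natfloor x)%:R <= x /\ x < (natfloor x)%:R + 1.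
Proof.
move=> x0; rewrite /natfloor natr_absz ger0_norm ?floor_ge0 //.
have /andP[h1 h2] := floor_itv x; split => //.
by rewrite intrD in h2.
Qed.

Lemma natceilE (x : R) : 0 <= x ->
  x <= (natceil x)%:R /\ (natceil x)%:R < x + 1.
Proof.
move=> x0; rewrite /natceil natr_absz ger0_norm; last first.
  by rewrite ceil_ge0 (lt_le_trans _ x0) // ltrN10.
have /andP[h1 h2] := ceil_itv x; split => //.
by move: h1; rewrite intrB ltrBlDr.
Qed.

Lemma natceil_le (x : R) k : 0 <= x -> x <= k%:R -> (natceil x <= k)%N.
Proof.
move=> x0 xk; have [_ h] := @natceilE x x0.
by rewrite -ltnS -(ltr_nat R) -addn1 natrD (lt_le_trans h) // lerD2r.
Qed.
End comb.

Section tail.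
Context d (T : measurableType d) (R : realType) (P : probability T R).

Lemma MgfE (X : {RV P >-> R}) r : 'M_P X r = (\int[P]_w (expR (r * X w))%:E)%E.
Proof.
rewrite /mmt_gen_fun unlock /=; apply: eq_integral => w _.
by rewrite mulrC.
Qed.

Lemma chern_sg (X : {RV P >-> R}) s2 r a : 0 < r -> subgaussian P X s2 ->
  (P [set x | (a <= X x)%R] <= (expR (r ^+ 2 * s2 / 2 - r * a))%:E)%E.
Proof.
move=> r0 sg; apply: (le_trans (chernoff _ _ r0)).
rewrite MgfE expRD EFinM lee_wpmul2r // ?lee_fin ?expR_ge0 //.
Qed.

Lemma tail_pos (X : {RV P >-> R}) (s c : R) : 0 < s -> 0 < c ->
  subgaussian P X (s ^+ 2) ->
  (P (X @^-1` `](s * Num.sqrt c)%R, +oo[) <= (expR (- (c / 2)))%:E)%E.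
Proof.
move=> s0 c0 sg.
have r0 : 0 < Num.sqrt c / s by rewrite divr_gt0 // sqrtr_gt0.
apply: (@le_trans _ _ (P [set x | (s * Num.sqrt c <= X x)%R])).
  apply: le_measure; rewrite ?inE.
  - exact: measurable_funPTI (measurable_itv _).
  - rewrite (_ : [set x | _] = X @^-1` `[s * Num.sqrt c, +oo[).
      exact: measurable_funPTI (measurable_itv _).
    by apply/seteqP; split => x /=; rewrite in_itv /= andbT.
  - by move=> x /=; rewrite in_itv /= andbT => /ltW.
have := @chern_sg X (s ^+ 2) _ (s * Num.sqrt c) r0 sg. move=> /le_trans; apply.
rewrite lee_fin ler_expR.
have sc : Num.sqrt c ^+ 2 = c by rewrite sqr_sqrtr // ltW.
have sn0 : s != 0 by rewrite gt_eqF.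
rewrite expr_div_n sc.
apply/eqP/eqP/eqP/eqP. rewrite le_eqVlt; apply/orP; left; apply/eqP.
have -> : Num.sqrt c / s * (s * Num.sqrt c) = c.
  rewrite -[RHS]sc; move: (Num.sqrt c) => t; by field.
by field; rewrite sn0.
Qed.

Lemma tail_zero (X : {RV P >-> R}) (c : R) : 0 < c ->
  subgaussian P X 0 ->
  (P (X @^-1` `]0%R, +oo[) <= (expR (- (c / 2)))%:E)%E.
Proof.
move=> c0 sg.
pose F k := X @^-1` `[(k.+1%:R^-1 : R), +oo[.
have mF k : measurable (F k) by exact: measurable_funPTI (measurable_itv _).
have UF : \bigcup_k F k = X @^-1` `]0%R, +oo[.
  apply/seteqP; split => x /=.
    case=> k _; rewrite /F /= !in_itv /= !andbT; apply: lt_le_trans.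
    by rewrite invr_gt0.
  rewrite in_itv /= andbT => x0.
  exists (Num.trunc (X x)^-1) => //; rewrite /F /= in_itv /= andbT.
  rewrite -[X x]invrK lef_pV2 ?posrE ?invr_gt0 //.
  by rewrite ltW // -truncn_lt_nat ?invr_ge0 ?ltW // !invrK.
have ndF : nondecreasing_seq F.
  move=> i j ij; apply/subsetPset => y; rewrite /F /= !in_itv /= !andbT; apply: le_trans.
  by rewrite lef_pV2 ?posrE // ler_nat.
have := @nondecreasing_cvg_mu _ _ _ P F mF.
rewrite UF => /(_ (measurable_funPTI _ (measurable_itv _)) ndF) h.
rewrite -(cvg_lim _ h) //; apply: lime_le; first by apply/cvg_ex; eexists; exact: h.
apply: nearW => k /=.
have r0 : 0 < c / 2 * k.+1%:R by rewrite mulr_gt0 // divr_gt0.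
have := @chern_sg X 0 _ (k.+1%:R^-1) r0 sg.
have -> : [set x | (k.+1%:R^-1 <= X x)%R] = F k.
  by apply/seteqP; split => x /=; rewrite /F /= in_itv /= andbT.
move/le_trans; apply; rewrite lee_fin ler_expR mulr0 mul0r sub0r lerN2.
by rewrite mulfK.
Qed.

Lemma tail (X : {RV P >-> R}) (s c : R) : 0 <= s -> 0 < c ->
  subgaussian P X (s ^+ 2) ->
  (P (X @^-1` `](s * Num.sqrt c)%R, +oo[) <= (expR (- (c / 2)))%:E)%E.
Proof.
rewrite le_eqVlt => /orP[/eqP <-|s0] c0 sg; last exact: tail_pos.
by rewrite mul0r; apply: tail_zero => //; move: sg; rewrite expr2 mul0r.
Qed.

Lemma tail_neg (X : {RV P >-> R}) (s c : R) : 0 <= s -> 0 < c ->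
  subgaussian P X (s ^+ 2) ->
  (P (X @^-1` `]-oo, (- (s * Num.sqrt c))%R[) <= (expR (- (c / 2)))%:E)%E.
Proof.
move=> s0 c0 sg.
have sgN : subgaussian P (measurable_realfun.scale_mfun (-1) X) (s ^+ 2).
  move=> lam; have := sg (- lam); rewrite sqrrN; apply: le_trans.
  by rewrite le_eqVlt; apply/orP; left; apply/eqP; apply: eq_integral => w _ /=; rewrite mulrN1 mulNr mulrN.
have := @tail (measurable_realfun.scale_mfun (-1) X) _ _ s0 c0 sgN; apply: le_trans.
rewrite le_eqVlt; apply/orP; left; apply/eqP; congr (P _).
by apply/seteqP; split => w /=; rewrite !in_itv /= ?andbT mulrN1 ltrNr.
Qed.

Lemma union_bound (I : Type) (s : seq I) (Pr : pred I) (F : I -> set T) :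
  (forall i, measurable (F i)) ->
  (P (\big[setU/set0]_(i <- s | Pr i) F i) <= \sum_(i <- s | Pr i) P (F i))%E.
Proof.
move=> mF; elim: s => [|i s IH]; first by rewrite !big_nil measure0.
rewrite !big_cons; case: (Pr i) => //.
apply: (le_trans (measureU2 _ _ _)) => //.
  by apply: bigsetU_measurable => j _.
exact: leeD.
Qed.

Lemma card_sets n : #|{set 'I_n}| = (2 ^ n)%N.
Proof.
rewrite -cardsT (_ : [set: {set 'I_n}]%SET = powerset [set: 'I_n]%SET).
  by rewrite card_powerset cardsT card_ord.
by apply/setP => A; rewrite inE powersetE finset.subsetT.
Qed.

Lemma bad_bound n (Z : 'I_n -> {RV P >-> R}) (A : set R) (q : R) K :
  measurable A -> mutually_independent Z -> 0 <= q <= 1 ->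
  (forall i, P (Z i @^-1` A) <= q%:E)%E ->
  (P (\big[setU/set0]_(J : {set 'I_n} | (K <= #|J|)%N)
        \bigcap_(j in [set j | j \in J]) (Z j @^-1` A))
    <= (2 ^+ n * q ^+ K)%:E)%E.
Proof.
move=> mA ind /andP[q0 q1] hq.
have := @union_bound _ (index_enum {set 'I_n}) (fun J : {set 'I_n} => (K <= #|J|)%N)
  (fun J => \bigcap_(j in [set j | j \in J]) (Z j @^-1` A)).
move/(_ _)/le_trans; apply.
  by move=> J; apply: fin_bigcap_measurable; first exact: finite_finset;
     move=> j _; exact: measurable_funPTI.
apply: le_trans (lee_sum (g := fun _ => (q ^+ K)%:E) _ _) _.
  move=> J KJ; rewrite (ind J (fun _ => A)) //.
  have finP j : P (Z j @^-1` A) = (fine (P (Z j @^-1` A)))%:E.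
    by rewrite fineK // fin_num_measure //; exact: measurable_funPTI.
  under eq_bigr => j _ do rewrite finP.
  rewrite prodEFin lee_fin.
  apply: (@le_trans _ _ (\prod_(j in J) q)).
    apply: ler_prod => j _; rewrite -lee_fin -finP hq andbT.
    by rewrite -lee_fin -finP measure_ge0.
  by rewrite prodr_const ler_wiXn2l.
rewrite sumEFin lee_fin.
apply: (@le_trans _ _ (\sum_(J : {set 'I_n}) q ^+ K)).
  by rewrite [leRHS](bigID (fun J : {set 'I_n} => (K <= #|J|)%N)) /= lerDl sumr_ge0 // => *; rewrite exprn_ge0.
by rewrite sumr_const card_sets -[leLHS]mulr_natl natrX.
Qed.
End tail.

Theorem mainTheorem3 (d : measure_display) (T : measurableType d) (R : realType)
  (P : probability T R) (n : nat) (Z : 'I_n -> {RV P >-> R})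
  (sigma alpha p0 : R) :
  0 <= sigma ->
  mutually_independent Z ->
  (forall i, subgaussian P (Z i) (sigma ^+ 2)) ->
  0 < alpha <= 1 ->
  0 < p0 <= 2^-1 ->
  exists E : set T, measurable E /\
    (P E >= (1 - 2 * expR (- (3 / 10) * n%:R))%:E)%E /\
    forall w, E w ->
    forall (p : R), p0 <= p <= 2^-1 ->
    forall V : {set 'I_n},
      Num.max (n%:R * alpha) (2 / p0) <= #|V|%:R ->
      let s := [seq Z i w | i <- enum V] in
      let B := sigma * Num.sqrt (4 / p0 * (alpha^-1 + 1)) in
      - B <= ordstat s (natceil ((1 - p) * #|V|%:R)) /\
      ordstat s (natceil ((1 - p) * #|V|%:R)) <= ordstat s (natfloor (p * #|V|%:R)) /\
      ordstat s (natfloor (p * #|V|%:R)) <= B.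
Proof.
move=> s0 ind sg /andP[a0 a1] /andP[p00 p01].
set c := 4 / p0 * (alpha^-1 + 1).
have c0 : 0 < c by rewrite /c mulr_gt0 ?divr_gt0 // ltr_wpDl // invr_ge0 ltW.
set B := sigma * Num.sqrt c.
set q := expR (- (c / 2)).
have q01 : 0 <= q <= 1.
  by rewrite expR_ge0 /= expR_le1 oppr_le0 divr_ge0 // ltW.
set K := natceil (2 / 3 * (p0 * alpha * n%:R)).
have A0 : 0 <= 2 / 3 * (p0 * alpha * n%:R) by rewrite !mulr_ge0 // ltW.
have [hK1 _] := @natceilE _ _ A0.
set Up := \big[setU/set0]_(J : {set 'I_n} | (K <= #|J|)%N)
        \bigcap_(j in [set j | j \in J]) (Z j @^-1` `]B, +oo[).
set Lo := \big[setU/set0]_(J : {set 'I_n} | (K <= #|J|)%N)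
        \bigcap_(j in [set j | j \in J]) (Z j @^-1` `]-oo, (- B)%R[).
have mUp : measurable Up.
  apply: bigsetU_measurable => J _; apply: fin_bigcap_measurable; first exact: finite_finset.
  by move=> j _; exact: measurable_funPTI (measurable_itv _).
have mLo : measurable Lo.
  apply: bigsetU_measurable => J _; apply: fin_bigcap_measurable; first exact: finite_finset.
  by move=> j _; exact: measurable_funPTI (measurable_itv _).
exists (~` (Up `|` Lo)); split; first exact/measurableC/measurableU.
split.
  have bnd : 2 ^+ n * q ^+ K <= expR (- (3 / 10) * n%:R).
    have key : 4/3 * n%:R <= K%:R * (c/2).
      apply: le_trans (ler_wpM2r _ hK1); last by rewrite divr_ge0 // ltW.
      have -> : 2 / 3 * (p0 * alpha * n%:R) * (c / 2) = 4/3 * (1 + alpha) * n%:R.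
        rewrite /c; field.
        by rewrite gt_eqF // gt_eqF.
      have n0 : 0 <= n%:R :> R by [].
      nra.
    have e2 : 2 <= expR (31/30) :> R.
      apply: le_trans (expR_ge1Dx _); lra.
    apply: (@le_trans _ _ (expR (31/30) ^+ n * q ^+ K)).
      by rewrite ler_wpM2r ?exprn_ge0 ?(andP q01).1 // lerXn2r // nnegrE ?expR_ge0.
    rewrite /q -!expRM_natl -expRD ler_expR.
    lra.
  rewrite probability_setC; last exact: measurableU.
  rewrite EFinB; apply: leeB => //.
  apply: (le_trans (measureU2 _ _ _)) => //.
  rewrite (_ : 2 * _ = expR (- (3/10) * n%:R) + expR (- (3/10) * n%:R)); last by ring.
  rewrite EFinD; apply: leeD.
    apply: (le_trans (@bad_bound _ _ _ P n Z `]B, +oo[ q K (measurable_itv _) ind q01 _)); last by rewrite lee_fin.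
    by move=> i; apply: tail.
  apply: (le_trans (@bad_bound _ _ _ P n Z `]-oo, (- B)%R[ q K (measurable_itv _) ind q01 _)); last by rewrite lee_fin.
  by move=> i; apply: tail_neg.
move=> w Ew p /andP[pp0 pp1] V hV sq Bq.
rewrite /Bq -/c -/B.
have Ew' : ~ (Up w \/ Lo w) by [].
set m := #|V| in hV *.
rewrite ge_max in hV; case/andP: hV => hm1 hm2.
have szs : size sq = m by rewrite /sq size_map -cardE.
have m0 : 0 <= m%:R :> R by [].
have hpm2 : 2 <= p * m%:R.
  have -> : 2 = p0 * (2 / p0) :> R by field; rewrite gt_eqF.
  by apply: ler_pM => //; [exact: ltW | rewrite divr_ge0 // ltW].
have hA : p0 * alpha * n%:R <= p * m%:R.
  rewrite -mulrA; apply: ler_pM => //; first exact: ltW.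
    by rewrite mulr_ge0 // ltW.
  by rewrite mulrC.
have pm0 : 0 <= p * m%:R by apply: le_trans hpm2.
have pm1 : p * m%:R <= (1 - p) * m%:R by nra.
have pm3 : (1 - p) * m%:R <= m%:R by nra.
have [hU1 hU2] := @natfloorE _ _ pm0.
have [hL1 hL2] := @natceilE _ ((1 - p) * m%:R) (le_trans pm0 pm1).
set tU := natfloor (p * m%:R) in hU1 hU2 *.
set tL := natceil ((1 - p) * m%:R) in hL1 hL2 *.
have tU0 : (1 < tU)%N by rewrite -(ltr_nat R); lra.
have tU2 : 2 <= tU%:R :> R by rewrite (ler_nat R 2).
have tUm : (tU <= m)%N by rewrite -(ler_nat R); lra.
have tL0 : (0 < tL)%N by rewrite -(ltr_nat R); lra.
have tLm : (tL <= m)%N by apply: natceil_le => //; lra.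
have tUL : (tU <= tL)%N by rewrite -(ler_nat R); lra.
have KU : (K <= tU)%N by apply: natceil_le => //; lra.
have KL : (K <= m - tL.-1)%N.
  apply: natceil_le => //.
  have e : tL%:R = tL.-1%:R + 1 :> R by rewrite natr1 prednK.
  rewrite natrB ?(leq_trans (leq_pred _) tLm) //; lra.
have inU (F : {set 'I_n} -> set T) (J : {set 'I_n}) : (K <= #|J|)%N ->
    F J `<=` \big[setU/set0]_(J : {set 'I_n} | (K <= #|J|)%N) F J.
  by move=> KJ x Fx; rewrite (bigD1 J) //=; left.
split.
  rewrite leNgt; apply/negP => h.
  have := @ordstat_lo _ sq tL (- B).
  rewrite szs tL0 tLm => /(_ isT h).
  rewrite /sq count_map count_card => hc.
  apply: Ew'; right.
  apply: (inU _ _ (leq_trans KL hc)) => j /= jJ.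
  rewrite /= in_itv /=; move: jJ; by rewrite /= !inE => /andP[].
split; first by apply: ordstat_mono; rewrite ?szs // (ltn_trans _ tU0).
rewrite leNgt; apply/negP => h.
have := @ordstat_up _ sq tU B.
rewrite szs (ltn_trans _ tU0) // tUm => /(_ isT h).
rewrite /sq count_map count_card => hc.
apply: Ew'; left.
apply: (inU _ _ (leq_trans KU hc)) => j /= jJ.
rewrite /= in_itv /= andbT; move: jJ; by rewrite /= !inE => /andP[].
Qed.
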